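(* For integers $m\ge1$ and $d\ge0$ define $$e(m,d)=2^{3-2m-d}\sum_{i=1}^{\lfloor (m+1)/2\rfloor} i\binom{2m+d+2}{m+d+2i+1}.$$ Then $e(m,d+1)<\frac{2m+d+3}{2m+2d+4}\,e(m,d)$ for all $d\ge 0$, and for each fixed $m\ge1$, $\lim_{d\to\infty}e(m,d)=0$.
   Context: $\binom{a}{b}=\frac{a!}{b!(a-b)!}$ for integers $0\le b\le a$. *)

(* Defs.v *)
From Stdlib Require Import Reals List Arith ZArith.
Open Scope R_scope.

Definition e (m d : nat) : R :=
  powerRZ 2 (3 - 2 * Z.of_nat m - Z.of_nat d)%Z *
  fold_right Rplus 0
    (map (fun i : nat => INR i * Binomial.C (2 * m + d + 2)%nat (m + d + 2 * i + 1)%nat)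
         (seq 1 ((m + 1) / 2)%nat)).

(* Main.v *)
Require Import Defs.
From Stdlib Require Import Reals List Arith ZArith.
From Stdlib Require Import Lra Lia.
Open Scope R_scope.

Lemma C_step (n k : nat) :
  Binomial.C (S n) (S k) = INR (S n) / INR (S k) * Binomial.C n k.
Proof.
  unfold Binomial.C.
  change (Factorial.fact (S n)) with (S n * Factorial.fact n)%nat.
  change (Factorial.fact (S k)) with (S k * Factorial.fact k)%nat.
  change (S n - S k)%nat with (n - k)%nat.
  rewrite !mult_INR.
  assert (INR (S k) <> 0) by (apply not_0_INR; lia).
  generalize (INR_fact_neq_0 n) (INR_fact_neq_0 k) (INR_fact_neq_0 (n-k)); intros.
  field; auto.
Qed.

Lemma C_pos (n k : nat) : 0 < Binomial.C n k.
Proof.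
  unfold Binomial.C.
  generalize (INR_fact_lt_0 n) (INR_fact_lt_0 k) (INR_fact_lt_0 (n-k)); intros.
  apply Rdiv_lt_0_compat; auto. apply Rmult_lt_0_compat; auto.
Qed.

Definition f (m d i : nat) : R :=
  INR i * Binomial.C (2 * m + d + 2)%nat (m + d + 2 * i + 1)%nat.

Definition Ssum (m d : nat) : R :=
  fold_right Rplus 0 (map (f m d) (seq 1 ((m + 1) / 2)%nat)).

Lemma e_eq m d : e m d = powerRZ 2 (3 - 2 * Z.of_nat m - Z.of_nat d)%Z * Ssum m d.
Proof. reflexivity. Qed.

Lemma sum_lt (a b : nat -> R) (c : R) (l : list nat) :
  l <> nil -> (forall x, In x l -> a x < c * b x) ->
  fold_right Rplus 0 (map a l) < c * fold_right Rplus 0 (map b l).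
Proof.
  induction l as [|x l IH]; intros Hn H; [congruence|].
  simpl. destruct l as [|y l'].
  - simpl. specialize (H x (or_introl eq_refl)). lra.
  - assert (H1 := H x (or_introl eq_refl)).
    assert (H2 : fold_right Rplus 0 (map a (y :: l')) < c * fold_right Rplus 0 (map b (y :: l'))).
    { apply IH. congruence. intros z Hz. apply H. right; exact Hz. }
    lra.
Qed.

Lemma sum_pos (a : nat -> R) (l : list nat) :
  (forall x, In x l -> 0 < a x) -> 0 <= fold_right Rplus 0 (map a l).
Proof.
  induction l as [|x l IH]; intros H; simpl; [lra|].
  assert (0 < a x) by (apply H; left; auto).
  assert (0 <= fold_right Rplus 0 (map a l)) by (apply IH; intros; apply H; right; auto).
  lra.
Qed.

Lemma f_pos m d i : (1 <= i)%nat -> 0 < f m d i.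
Proof.
  intros. unfold f. apply Rmult_lt_0_compat. apply lt_0_INR; lia. apply C_pos.
Qed.

Lemma f_step m d i : (1 <= i)%nat ->
  f m (S d) i < (INR (2 * m + d + 3) / INR (2 * m + 2 * d + 4) * 2) * f m d i.
Proof.
  intros Hi. unfold f.
  replace (2 * m + S d + 2)%nat with (S (2 * m + d + 2)) by lia.
  replace (m + S d + 2 * i + 1)%nat with (S (m + d + 2 * i + 1)) by lia.
  rewrite C_step.
  replace (S (2 * m + d + 2)) with (2 * m + d + 3)%nat by lia.
  set (s := INR (2 * m + d + 3)).
  set (x := INR (S (m + d + 2 * i + 1))).
  set (y := INR (2 * m + 2 * d + 4)).
  assert (hs : 0 < s) by (apply lt_0_INR; lia).
  assert (hy : 0 < y) by (apply lt_0_INR; lia).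
  assert (hxy : y < 2 * x).
  { unfold x, y. replace 2 with (INR 2) by (simpl; lra).
    rewrite <- mult_INR. apply lt_INR. lia. }
  assert (hx : 0 < x) by lra.
  assert (hi : 0 < INR i) by (apply lt_0_INR; lia).
  assert (hC := C_pos (2 * m + d + 2) (m + d + 2 * i + 1)).
  set (c := Binomial.C (2 * m + d + 2) (m + d + 2 * i + 1)) in *.
  assert (key : s / x < s / y * 2).
  { unfold Rdiv. rewrite Rmult_assoc. apply Rmult_lt_compat_l; auto.
    replace (/ y * 2) with (/ (y / 2)) by (field; lra).
    apply Rinv_lt_contravar. apply Rmult_lt_0_compat; lra. lra. }
  assert (0 < INR i * c) by (apply Rmult_lt_0_compat; auto).
  replace (INR i * (s / x * c)) with ((s / x) * (INR i * c)) by ring.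
  replace (s / y * 2 * (INR i * c)) with ((s / y * 2) * (INR i * c)) by ring.
  apply Rmult_lt_compat_r; auto.
Qed.

Lemma seq_ne m : (1 <= m)%nat -> seq 1 ((m + 1) / 2) <> nil.
Proof.
  intros Hm. assert (H1 : (1 <= (m+1)/2)%nat) by (apply Nat.div_le_lower_bound; lia).
  destruct ((m + 1) / 2)%nat eqn:E.
  - lia.
  - simpl. congruence.
Qed.

Lemma pow_step m d :
  powerRZ 2 (3 - 2 * Z.of_nat m - Z.of_nat (S d))%Z =
  powerRZ 2 (3 - 2 * Z.of_nat m - Z.of_nat d)%Z * / 2.
Proof.
  rewrite Nat2Z.inj_succ.
  replace (3 - 2 * Z.of_nat m - Z.succ (Z.of_nat d))%Z
    with ((3 - 2 * Z.of_nat m - Z.of_nat d) + (-1))%Z by lia.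
  rewrite powerRZ_add by lra. simpl. f_equal. field.
Qed.

Lemma step m d : (1 <= m)%nat ->
  e m (S d) < INR (2 * m + d + 3) / INR (2 * m + 2 * d + 4) * e m d.
Proof.
  intros Hm. rewrite !e_eq, pow_step.
  set (P := powerRZ 2 (3 - 2 * Z.of_nat m - Z.of_nat d)%Z).
  assert (hP : 0 < P) by (apply powerRZ_lt; lra).
  assert (H : Ssum m (S d) < (INR (2 * m + d + 3) / INR (2 * m + 2 * d + 4) * 2) * Ssum m d).
  { unfold Ssum. apply sum_lt. apply seq_ne; auto.
    intros x Hx. apply in_seq in Hx. apply f_step. lia. }
  replace (P * / 2 * Ssum m (S d)) with ((P / 2) * Ssum m (S d)) by (unfold Rdiv; ring).
  replace (INR (2 * m + d + 3) / INR (2 * m + 2 * d + 4) * (P * Ssum m d))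
    with ((P / 2) * ((INR (2 * m + d + 3) / INR (2 * m + 2 * d + 4) * 2) * Ssum m d))
    by (field; apply not_0_INR; lia).
  apply Rmult_lt_compat_l; auto. lra.
Qed.

Lemma e_nonneg m d : 0 <= e m d.
Proof.
  rewrite e_eq. apply Rmult_le_pos. left; apply powerRZ_lt; lra.
  unfold Ssum. apply sum_pos. intros x Hx. apply in_seq in Hx. apply f_pos. lia.
Qed.

Lemma ratio_le m d : (m <= d)%nat ->
  INR (2 * m + d + 3) / INR (2 * m + 2 * d + 4) <= 3 / 4.
Proof.
  intros H.
  assert (hb : 0 < INR (2 * m + 2 * d + 4)) by (apply lt_0_INR; lia).
  assert (h : 4 * INR (2 * m + d + 3) <= 3 * INR (2 * m + 2 * d + 4)).
  { replace 4 with (INR 4) by (simpl; lra). replace 3 with (INR 3) by (simpl; lra).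
    rewrite <- !mult_INR. apply le_INR. lia. }
  apply (Rmult_le_reg_r (INR (2 * m + 2 * d + 4))); auto.
  unfold Rdiv. rewrite Rmult_assoc, Rinv_l by lra. lra.
Qed.

Lemma geom m (Hm : (1 <= m)%nat) j : e m (m + j) <= (3/4)^j * e m m.
Proof.
  induction j.
  - rewrite Nat.add_0_r. simpl. lra.
  - replace (m + S j)%nat with (S (m + j)) by lia.
    assert (h1 := step m (m + j) Hm).
    assert (h2 := ratio_le m (m + j) ltac:(lia)).
    assert (h3 := e_nonneg m (m + j)).
    assert (e m (S (m + j)) <= 3/4 * e m (m + j)).
    { left. eapply Rlt_le_trans; [exact h1|]. apply Rmult_le_compat_r; auto. }
    simpl. assert (0 <= 3/4) by lra. nra.
Qed.

Theorem mainTheorem11 (m : nat) (hm : (1 <= m)%nat) :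
  (forall d : nat,
      e m (S d) < INR (2 * m + d + 3) / INR (2 * m + 2 * d + 4) * e m d) /\
  Un_cv (fun d : nat => e m d) 0.
Proof.
  split.
  - intros d. apply step; auto.
  - intros eps Heps.
    set (E := e m m).
    assert (hE : 0 <= E) by apply e_nonneg.
    destruct (pow_lt_1_zero (3/4) ltac:(rewrite Rabs_right; lra) (eps / (E + 1)))
      as [N HN].
    { apply Rdiv_lt_0_compat; lra. }
    exists (N + m)%nat. intros n Hn.
    unfold Rdist. rewrite Rminus_0_r.
    replace n with (m + (n - m))%nat by lia.
    assert (h0 := e_nonneg m (m + (n - m))).
    rewrite Rabs_right by lra.
    assert (hg := geom m hm (n - m)).
    assert (hq := HN (n - m)%nat ltac:(lia)).
    assert (hp : 0 <= (3/4)^(n-m)) by (apply pow_le; lra).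
    rewrite Rabs_right in hq by lra.
    assert (hq' : (3/4)^(n-m) * (E + 1) < eps).
    { apply (Rmult_lt_compat_r (E+1)) in hq; [|lra].
      replace (eps / (E + 1) * (E + 1)) with eps in hq by (field; lra). exact hq. }
    assert ((3/4)^(n-m) * E <= (3/4)^(n-m) * (E + 1)) by (apply Rmult_le_compat_l; lra).
    fold E in hg. lra.
Qed.
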